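(* Let $K$ be a field with $\mathrm{char}(K)\ne 2$ and $E$ a row-finite graph. Then the following are equivalent: (i) $\mathbf{K}_{L_K(E)}$ is Lie solvable; (ii) $\mathbf{K}_{L_K(E)}$ is Lie nilpotent; (iii) $E$ is a disjoint union of graphs of types $E_1$, $E_2$ and $E_4$.
   Context: A graph is row-finite if no vertex emits infinitely many edges. Graphs: $E_1$: a single vertex, no edges. $E_2$: a single vertex with one loop. $E_4$: a vertex $u$ and a nonempty set of distinct vertices $u_i$ ($i\in I$), exactly one edge $u\to u_i$ for each $i$, no other edges. ''Disjoint union of graphs of the listed types'' means every connected component is isomorphic to one of them. $L_K(E)$ is the Leavitt path algebra: the free $K$-algebra generated by $E^0\cup E^1\cup\{e^*:e\in E^1\}$ subject to $vv'=\delta_{v,v'}v$; $s(e)e=er(e)=e$; $r(e)e^*=e^*s(e)=e^*$; $e^*f=\delta_{e,f}r(e)$; $v=\sum_{s(e)=v}ee^*$ for every non-sink vertex $v$. The standard involution ${}^\star$ is the $K$-linear involution with $v^\star=v$, $e^\star=e^*$, $(e^* )^\star=e$; $\mathbf{K}_{L_K(E)}=\{x: x^\star=-x\}$ with bracket $[a,b]=ab-ba$. $\mathcal{L}^{(0)}=\mathcal{L}$, $\mathcal{L}^{(n)}=[\mathcal{L}^{(n-1)},\mathcal{L}^{(n-1)}]$; $\mathcal{L}^0=\mathcal{L}$, $\mathcal{L}^n=[\mathcal{L}^{n-1},\mathcal{L}]$; Lie solvable (resp. nilpotent) means $\mathcal{L}^{(n)}=0$ (resp. $\mathcal{L}^n=0$)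 for some $n$. *)

(* Defs.v *)
From HB Require Import structures.
From mathcomp Require Import all_boot all_order all_algebra.
From Stdlib Require Import Relations.Relation_Operators.
Set Implicit Arguments. Unset Strict Implicit. Unset Printing Implicit Defensive.
Import GRing.Theory.
Local Open Scope ring_scope.

Section Graphs.
Variables (V : Type) (Ed : Type) (s r : Ed -> V).

Definition row_finite {Ed' : eqType} (s' : Ed' -> V) : Prop :=
  forall v : V, exists es : seq Ed', uniq es /\ forall e, s' e = v <-> e \in es.

Definition adj (u v : V) : Prop := exists e, s e = u /\ r e = v.

Definition conn : V -> V -> Prop := clos_refl_sym_trans V adj.

Lemma conn_rng (v0 : V) (e : Ed) : conn v0 (s e) -> conn v0 (r e).
Proof.
move=> H; apply: rst_trans H _; apply: rst_step; by exists e.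
Qed.

Definition compV (v0 : V) := {v : V | conn v0 v}.
Definition compE (v0 : V) := {e : Ed | conn v0 (s e)}.
Definition comp_s (v0 : V) (e : compE v0) : compV v0 :=
  exist _ (s (proj1_sig e)) (proj2_sig e).
Definition comp_r (v0 : V) (e : compE v0) : compV v0 :=
  exist _ (r (proj1_sig e)) (conn_rng (proj2_sig e)).
End Graphs.

Definition graph_iso (V1 E1 : Type) (s1 r1 : E1 -> V1)
                     (V2 E2 : Type) (s2 r2 : E2 -> V2) : Prop :=
  exists (fV : V1 -> V2) (fE : E1 -> E2),
    bijective fV /\ bijective fE /\
    forall e, s2 (fE e) = fV (s1 e) /\ r2 (fE e) = fV (r1 e).

Definition E1_s (e : Empty_set) : unit := match e with end.
Definition E1_r (e : Empty_set) : unit := match e with end.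
Definition E2_s (e : unit) : unit := tt.
Definition E2_r (e : unit) : unit := tt.
(* E_4 (index set I) : vertex u = None, vertices u_i = Some i, edges u -> u_i *)
Definition E4_s (I : Type) (i : I) : option I := None.
Definition E4_r (I : Type) (i : I) : option I := Some i.

(* every connected component is isomorphic to E_1, E_2 or some E_4 *)
Definition disjoint_union_E1_E2_E4 (V Ed : Type) (s r : Ed -> V) : Prop :=
  forall v0 : V,
    graph_iso (@comp_s V Ed s r v0) (@comp_r V Ed s r v0) E1_s E1_r \/
    graph_iso (@comp_s V Ed s r v0) (@comp_r V Ed s r v0) E2_s E2_r \/
    exists (I : Type), inhabited I /\
      graph_iso (@comp_s V Ed s r v0) (@comp_r V Ed s r v0) (@E4_s I) (@E4_r I).

Section Algebras.
Variable K : fieldType.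

Definition nalg_axioms (A : lmodType K) (mul : A -> A -> A) : Prop :=
  [/\ forall x y z, mul x (mul y z) = mul (mul x y) z,
      forall x y z, mul (x + y) z = mul x z + mul y z,
      forall x y z, mul x (y + z) = mul x y + mul x z,
      forall (k : K) x y, mul (k *: x) y = k *: mul x y
    & forall (k : K) x y, mul x (k *: y) = k *: mul x y].

Variables (V : Type) (Ed : eqType) (s r : Ed -> V).

Definition leavitt_family (A : lmodType K) (mul : A -> A -> A)
    (vA : V -> A) (eA esA : Ed -> A) : Prop :=
  (forall v, mul (vA v) (vA v) = vA v) /\
  (forall v v', v <> v' -> mul (vA v) (vA v') = 0) /\
  (forall e, mul (vA (s e)) (eA e) = eA e /\ mul (eA e) (vA (r e)) = eA e) /\
  (forall e, mul (vA (r e)) (esA e) = esA e /\ mul (esA e) (vA (s e)) = esA e) /\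
  (forall e, mul (esA e) (eA e) = vA (r e)) /\
  (forall e f, e <> f -> mul (esA e) (eA f) = 0) /\
  (forall v (es : seq Ed), uniq es -> (forall e, s e = v <-> e \in es) ->
     es <> [::] -> vA v = \sum_(e <- es) mul (eA e) (esA e)).

Definition generated_by (A : lmodType K) (mul : A -> A -> A)
    (vA : V -> A) (eA esA : Ed -> A) : Prop :=
  forall P : A -> Prop,
    (forall v, P (vA v)) -> (forall e, P (eA e)) -> (forall e, P (esA e)) ->
    P 0 -> (forall x y, P x -> P y -> P (x + y)) ->
    (forall (k : K) x, P x -> P (k *: x)) ->
    (forall x y, P x -> P y -> P (mul x y)) ->
    forall x, P x.

(* (A, mul, vA, eA, esA) is the Leavitt path algebra L_K(E): the free     *)
(* K-algebra on the generators subject to the Leavitt relations, given by *)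
(* its universal property (plus generation, which gives uniqueness).      *)
Definition is_leavitt_path_algebra (A : lmodType K) (mul : A -> A -> A)
    (vA : V -> A) (eA esA : Ed -> A) : Prop :=
  [/\ nalg_axioms mul, leavitt_family mul vA eA esA,
      generated_by mul vA eA esA &
      forall (B : lmodType K) (mulB : B -> B -> B) (vB : V -> B) (eB esB : Ed -> B),
        nalg_axioms mulB -> leavitt_family mulB vB eB esB ->
        exists f : A -> B,
          (forall x y, f (x + y) = f x + f y) /\
          (forall (k : K) x, f (k *: x) = k *: f x) /\
          (forall x y, f (mul x y) = mulB (f x) (f y)) /\
          (forall v, f (vA v) = vB v) /\
          (forall e, f (eA e) = eB e) /\
          (forall e, f (esA e) = esB e)].

Definition standard_involution (A : lmodType K) (mul : A -> A -> A)
    (vA : V -> A) (eA esA : Ed -> A) (star : A -> A) : Prop :=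
  (forall x y, star (x + y) = star x + star y) /\
  (forall (k : K) x, star (k *: x) = k *: star x) /\
  (forall x y, star (mul x y) = mul (star y) (star x)) /\
  (forall x, star (star x) = x) /\
  (forall v, star (vA v) = vA v) /\
  (forall e, star (eA e) = esA e) /\
  (forall e, star (esA e) = eA e).
End Algebras.

Section Lie.
Variables (K : fieldType) (A : lmodType K) (mul : A -> A -> A) (star : A -> A).

Definition skew (x : A) : Prop := star x = - x.

Definition lie_br (x y : A) : A := mul x y - mul y x.

Inductive kspan (G : A -> Prop) : A -> Prop :=
  | kspan_gen x : G x -> kspan G x
  | kspan_0 : kspan G 0
  | kspan_add x y : kspan G x -> kspan G y -> kspan G (x + y)
  | kspan_scale (k : K) x : kspan G x -> kspan G (k *: x).

Definition lie_bracket_set (X Y : A -> Prop) : A -> Prop :=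
  kspan (fun z => exists x y, X x /\ Y y /\ z = lie_br x y).

Fixpoint derived (n : nat) : A -> Prop :=
  match n with
  | 0 => skew
  | n'.+1 => lie_bracket_set (derived n') (derived n')
  end.

Fixpoint lower_central (n : nat) : A -> Prop :=
  match n with
  | 0 => skew
  | n'.+1 => lie_bracket_set (lower_central n') skew
  end.

Definition lie_solvable : Prop := exists n, forall x, derived n x -> x = 0.
Definition lie_nilpotent : Prop := exists n, forall x, lower_central n x -> x = 0.
End Lie.

(* Main.v *)
Set Warnings "-all".
Require Import Defs.
From HB Require Import structures.
From mathcomp Require Import all_boot all_order all_algebra.
From mathcomp Require Import boolp zify.
From Stdlib Require Import Relations.Relation_Operators ProofIrrelevance.
Import Order.TTheory GRing.Theory Num.Theory.
Local Open Scope ring_scope.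
Set Implicit Arguments. Unset Strict Implicit.

Lemma sig_eq (T : Type) (P : T -> Prop) (x y : {v | P v}) : proj1_sig x = proj1_sig y -> x = y.
Proof. case: x y => [x px] [y py] /= E; subst y; f_equal; apply: proof_irrelevance. Qed.

Section Graph.
Variables (V : Type) (Ed : eqType) (s r : Ed -> V).
Local Notation conn := (conn s r).

Lemma conn_back v0 g : conn v0 (r g) -> conn v0 (s g).
Proof. move=> H; apply: rst_trans H _; apply: rst_sym; apply: rst_step; by exists g. Qed.
Lemma conn_fwd v0 g : conn v0 (s g) -> conn v0 (r g).
Proof. move=> H; apply: rst_trans H _; apply: rst_step; by exists g. Qed.

Lemma DU_F1 : disjoint_union_E1_E2_E4 s r ->
  forall l g, s l = r l -> (s g = s l \/ r g = s l) -> g = l.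
Proof.
move=> DU l g Hll Hg.
have cl : conn (s l) (s l) by apply: rst_refl.
have cg : conn (s l) (s g).
  by case: Hg => E; [rewrite E | apply: conn_back; rewrite E]; apply: rst_refl.
pose el : compE s r (s l) := exist _ l cl.
pose eg : compE s r (s l) := exist _ g cg.
case: (DU (s l)) => [[fV [fE [_ [_ _]]]] | [[fV [fE [_ [[gE HgE1 HgE2] _]]]] |
                     [I [_ [fV [fE [[gV HV1 HV2] [_ H]]]]]]]].
- by case: (fE el).
- have E : fE eg = fE el by case: (fE eg); case: (fE el).
  by have := congr1 (@proj1_sig _ _) (can_inj HgE1 E).
- have [H1 H2] := H el.
  have E : comp_s el = comp_r el by apply: sig_eq; rewrite /= Hll.
  by move: H1; rewrite E -H2.
Qed.

Lemma DU_F2 : disjoint_union_E1_E2_E4 s r -> forall e, s e <> r e ->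
  (forall g, s g <> r e) /\ (forall g, r g <> s e) /\ (forall g, r g = r e -> g = e).
Proof.
move=> DU e He.
have ce : conn (s e) (s e) by apply: rst_refl.
pose ee : compE s r (s e) := exist _ e ce.
case: (DU (s e)) => [[fV [fE [_ [_ _]]]] | [[fV [fE [[gV HV1 HV2] _]]] |
                     [I [_ [fV [fE [[gV HV1 HV2] [[gE HE1 HE2] H]]]]]]]].
- by case: (fE ee).
- have E : fV (comp_s ee) = fV (comp_r ee) by case: (fV _); case: (fV _).
  by have := congr1 (@proj1_sig _ _) (can_inj HV1 E).
- have [H1e H2e] := H ee.
  split; [|split].
  + move=> g Eg.
    have cg : conn (s e) (s g) by rewrite Eg; apply: conn_fwd.
    have [H1g _] := H (exist _ g cg).
    have E : comp_s (exist _ g cg) = comp_r ee by apply: sig_eq; rewrite /= Eg.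
    by move: H1g; rewrite E -H2e.
  + move=> g Eg.
    have cg : conn (s e) (s g) by apply: conn_back; rewrite Eg.
    have [_ H2g] := H (exist _ g cg).
    have E : comp_r (exist _ g cg) = comp_s ee by apply: sig_eq; rewrite /= Eg.
    by move: H2g; rewrite E -H1e.
  + move=> g Eg.
    have cg : conn (s e) (s g) by apply: conn_back; rewrite Eg; apply: conn_fwd.
    have [_ H2g] := H (exist _ g cg).
    have E : comp_r (exist _ g cg) = comp_r ee by apply: sig_eq; rewrite /= Eg.
    move: H2g; rewrite E -H2e => [[/(can_inj HE1) E2]].
    by have := congr1 (@proj1_sig _ _) E2.
Qed.

Lemma conn_prop v0 (P : V -> Prop) :
  (forall g, conn v0 (s g) -> P (s g) -> P (r g)) ->
  (forall g, conn v0 (r g) -> P (r g) -> P (s g)) ->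
  forall a, conn v0 a -> P a -> forall v, conn v0 v -> P v.
Proof.
move=> Hf Hb.
have H : forall x y, conn x y -> conn v0 x -> (P x <-> P y).
  move=> x y; elim=> {x y}.
  - move=> x y [g [Hs Hr]] Hx; subst x y; split; first exact: Hf.
    by apply: Hb; apply: conn_fwd.
  - by move=> x _.
  - move=> x y Hxy IH Hy; have Hx : conn v0 x by exact: (rst_trans _ _ _ _ _ Hy (rst_sym _ _ _ _ Hxy)).
    by have := IH Hx; tauto.
  - move=> x y z Hxy IH1 Hyz IH2 Hx.
    have Hy : conn v0 y by exact: (rst_trans _ _ _ _ _ Hx Hxy).
    by have := IH1 Hx; have := IH2 Hy; tauto.
move=> a Ha Pa v Hv.
have Hav : conn a v by exact: (rst_trans _ _ _ _ _ (rst_sym _ _ _ _ Ha) Hv).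
by apply/(H _ _ Hav Ha).
Qed.

Definition cA := exists e f, e <> f /\ r e = r f.
Definition cB := exists l g, s l = r l /\ g <> l /\ s g = s l.
Definition cC := exists e f, s e <> r e /\ s f <> r f /\ r e = s f.

Lemma noBad_DU : ~ cA -> ~ cB -> ~ cC -> disjoint_union_E1_E2_E4 s r.
Proof.
move=> nA nB nC v0.
have inj : forall f f', r f = r f' -> f = f'.
  move=> f f' E; case: (pselect (f = f')) => // N; case: nA; by exists f, f'.
case: (pselect (exists g, conn v0 (s g))) => [[g0 Hg0]|Hno].
2: {
  left.
  have Cv : forall v, conn v0 v -> v = v0.
    apply: (@conn_prop v0 (fun v => v = v0)) => //; last exact: rst_refl.
    - by move=> g Hg; case: Hno; exists g.
    - by move=> g Hg; case: Hno; exists g; apply: conn_back.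
  exists (fun _ => tt), (fun x : compE s r v0 => match Hno (ex_intro _ (proj1_sig x) (proj2_sig x)) with end).
  split; [|split].
  - exists (fun _ => exist _ v0 (rst_refl _ _ v0)).
      by move=> x; apply: sig_eq; rewrite /= (Cv _ (proj2_sig x)).
    by case.
  - exists (fun e : Empty_set => match e with end).
      by move=> x; case: Hno; exists (proj1_sig x); apply: (proj2_sig x).
    by case.
  - by move=> x; case: Hno; exists (proj1_sig x); apply: (proj2_sig x). }
case: (pselect (s g0 = r g0)) => Hloop.
-
  right; left.
  have Cv : forall v, conn v0 v -> v = s g0.
    apply: (@conn_prop v0 (fun v => v = s g0) _ _ (s g0) Hg0 erefl).
    + move=> g _ E; have Eg : g = g0.
        by case: (pselect (g = g0)) => // N; case: nB; exists g0, g.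
      by rewrite Eg -Hloop.
    + move=> g _ E; have Eg : g = g0.
        by apply: inj; rewrite E.
      by rewrite Eg.
  have Ce : forall g, conn v0 (s g) -> g = g0.
    move=> g Hg; case: (pselect (g = g0)) => // N; case: nB; exists g0, g.
    by split=> //; split=> //; apply: (Cv _ Hg).
  exists (fun _ => tt), (fun _ => tt); split; [|split].
  + exists (fun _ => exist _ (s g0) Hg0).
      by move=> x; apply: sig_eq; rewrite /= (Cv _ (proj2_sig x)).
    by case.
  + exists (fun _ => exist _ g0 Hg0).
      by move=> x; apply: sig_eq; rewrite /= (Ce _ (proj2_sig x)).
    by case.
  + by move=> x; split; case: (E2_s _); case: (E2_r _).
-
  right; right.
  pose u := s g0.
  have NL : forall f, s f = u -> r f <> u.
    move=> f Hf Hr; case: (pselect (g0 = f)) => [E|N].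
      by apply: Hloop; rewrite E Hr.
    by case: nB; exists f, g0; split; [rewrite Hf | split].
  have Cv : forall v, conn v0 v -> v = u \/ exists f, s f = u /\ r f = v.
    apply: (@conn_prop v0 (fun v => v = u \/ exists f, s f = u /\ r f = v) _ _ u Hg0 (or_introl erefl)).
    + move=> g _ Pg; case: (pselect (s g = u)) => [E|N]; first by right; exists g.
      case: Pg => [//|[f [Hf Hr]]].
      have Hnf : s f <> r f by rewrite Hf Hr => E; apply: N; rewrite E.
      case: (pselect (s g = r g)) => Hgl.
        case: nA; exists f, g; split; last by rewrite Hr Hgl.
        by move=> E; apply: Hnf; rewrite E.
      by case: nC; exists f, g.
    + move=> g _ Pg; case: Pg => [E|[f [Hf Hr]]].
        case: (pselect (s g = r g)) => Hgl.
          case: nB; exists g, g0; split=> //; split; last by rewrite Hgl E.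
          by move=> E'; apply: Hloop; rewrite E'.
        by case: nC; exists g, g0.
      by left; rewrite (inj _ _ (esym Hr)) // in Hf *; rewrite -Hr; apply: inj.
  have Ce : forall g, conn v0 (s g) -> s g = u.
    move=> g Hg; case: (Cv _ Hg) => [//|[f [Hf Hr]]].
    case: (pselect (r f = u)) => [E|N]; first by rewrite -Hr E.
    have Hnf : s f <> r f by rewrite Hf => E; apply: N; rewrite -E.
    case: (pselect (s g = r g)) => Hgl.
      case: nA; exists f, g; split; last by rewrite Hr Hgl.
      by move=> E; apply: Hnf; rewrite E Hgl.
    by case: nC; exists f, g.
  have pick : forall x : compV s r v0, proj1_sig x <> u -> exists f, s f = u /\ r f = proj1_sig x.
    by move=> x Nx; case: (Cv _ (proj2_sig x)).
  have cg : forall i : {f : Ed | s f = u}, conn v0 (s (proj1_sig i)).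
    by move=> i; rewrite (proj2_sig i).
  exists {f : Ed | s f = u}; split; first exact: (inhabits (exist _ g0 erefl)).
  exists (fun x => match pselect (proj1_sig x = u) with
                  | left _ => None
                  | right Hne => Some (exist (fun f => s f = u) (proj1_sig (cid (pick x Hne)))
                                         (proj1 (proj2_sig (cid (pick x Hne))))) end).
  exists (fun x : compE s r v0 => exist (fun f => s f = u) (proj1_sig x) (Ce _ (proj2_sig x))).
  split; [|split].
  - exists (fun o => match o with None => exist _ u Hg0
                    | Some i => exist _ (r (proj1_sig i)) (conn_fwd (cg i)) end).
      move=> x; case: pselect => [E|Hne]; first by apply: sig_eq; rewrite /= E.
      by apply: sig_eq => /=; case: (cid (pick x Hne)) => f [_ ->].
    case=> [i|] /=; case: pselect => [E|Hne] //.
    + by case: (NL _ (proj2_sig i)).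
    + congr Some; apply: sig_eq => /=; case: (cid _) => f [_ Hf] /=; exact: inj.
  - exists (fun i => exist _ (proj1_sig i) (cg i)).
      by move=> x; apply: sig_eq.
    by move=> i; apply: sig_eq.
  - move=> x; split.
    + rewrite /E4_s /comp_s /=; case: pselect => // Hne.
      by case: Hne; apply: Ce; apply: (proj2_sig x).
    + rewrite /E4_r /comp_r /=; case: pselect => [E|Hne].
        by case: (NL (proj1_sig x)); [apply: Ce; apply: (proj2_sig x) | ].
      congr Some; apply: sig_eq => /=; case: (cid _) => f [_ Hf] /=; exact: inj.
Qed.
End Graph.

Section RepType.
Variables (K : fieldType) (V : Type) (Ed : eqType).

CoInductive bp := Stop of V | Cons of Ed & bp.

Definition Fn := bp -> int -> K.
Definition fadd (f g : Fn) : Fn := fun q n => f q n + g q n.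
Definition fscale (k : K) (f : Fn) : Fn := fun q n => k * f q n.

Record op := Op { opf : Fn -> Fn;
  opD : forall f g, opf (fadd f g) = fadd (opf f) (opf g);
  opZ : forall k f, opf (fscale k f) = fscale k (opf f) }.

Lemma op_ext (x y : op) : (forall f q n, opf x f q n = opf y f q n) -> x = y.
Proof.
case: x => fx Dx Zx; case: y => fy Dy Zy /= H.
have E : fx = fy by apply: functional_extensionality_dep => f;
  apply: functional_extensionality_dep => q; apply: functional_extensionality_dep => n.
subst fy; f_equal; apply: proof_irrelevance.
Qed.

Program Definition opadd (x y : op) : op := @Op (fun f => fadd (opf x f) (opf y f)) _ _.
Next Obligation.
rewrite !opD; apply: functional_extensionality_dep => q; apply: functional_extensionality_dep => n.
by rewrite /fadd addrACA.
Qed.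
Next Obligation.
rewrite !opZ; apply: functional_extensionality_dep => q; apply: functional_extensionality_dep => n.
by rewrite /fadd /fscale mulrDr.
Qed.

Program Definition opopp (x : op) : op := @Op (fun f q n => - opf x f q n) _ _.
Next Obligation.
rewrite !opD; apply: functional_extensionality_dep => q; apply: functional_extensionality_dep => n.
by rewrite /fadd opprD.
Qed.
Next Obligation.
rewrite !opZ; apply: functional_extensionality_dep => q; apply: functional_extensionality_dep => n.
by rewrite /fscale mulrN.
Qed.

Program Definition opzero : op := @Op (fun f q n => 0) _ _.
Next Obligation.
apply: functional_extensionality_dep => q; apply: functional_extensionality_dep => n.
by rewrite /fadd addr0.
Qed.
Next Obligation.
apply: functional_extensionality_dep => q; apply: functional_extensionality_dep => n.
by rewrite /fscale mulr0.
Qed.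

Program Definition opscale (k : K) (x : op) : op := @Op (fun f q n => k * opf x f q n) _ _.
Next Obligation.
rewrite !opD; apply: functional_extensionality_dep => q; apply: functional_extensionality_dep => n.
by rewrite /fadd mulrDr.
Qed.
Next Obligation.
rewrite !opZ; apply: functional_extensionality_dep => q; apply: functional_extensionality_dep => n.
by rewrite /fscale mulrCA.
Qed.

Program Definition opmul (x y : op) : op := @Op (fun f => opf x (opf y f)) _ _.
Next Obligation. by rewrite !opD. Qed.
Next Obligation. by rewrite !opZ. Qed.

Lemma opaddA : associative opadd.
Proof. by move=> x y z; apply: op_ext => f q n /=; rewrite /fadd addrA. Qed.
Lemma opaddC : commutative opadd.
Proof. by move=> x y; apply: op_ext => f q n /=; rewrite /fadd addrC. Qed.
Lemma opadd0 : left_id opzero opadd.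
Proof. by move=> x; apply: op_ext => f q n /=; rewrite /fadd add0r. Qed.
Lemma opaddN : left_inverse opzero opopp opadd.
Proof. by move=> x; apply: op_ext => f q n /=; rewrite /fadd addNr. Qed.

End RepType.

HB.instance Definition _ (K : fieldType) (V : Type) (Ed : eqType) := gen_eqMixin (op K V Ed).
HB.instance Definition _ (K : fieldType) (V : Type) (Ed : eqType) := gen_choiceMixin (op K V Ed).
HB.instance Definition _ (K : fieldType) (V : Type) (Ed : eqType) :=
  GRing.isZmodule.Build (op K V Ed) (@opaddA K V Ed) (@opaddC K V Ed) (@opadd0 K V Ed) (@opaddN K V Ed).

Section RepLmod.
Variables (K : fieldType) (V : Type) (Ed : eqType).
Lemma opscaleA (a b : K) (x : op K V Ed) : opscale a (opscale b x) = opscale (a * b) x.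
Proof. by apply: op_ext => f q n /=; rewrite mulrA. Qed.
Lemma opscale1 : left_id 1 (@opscale K V Ed).
Proof. by move=> x; apply: op_ext => f q n /=; rewrite mul1r. Qed.
Lemma opscaleDr : right_distributive (@opscale K V Ed) +%R.
Proof. by move=> a x y; apply: op_ext => f q n /=; rewrite /fadd mulrDr. Qed.
Lemma opscaleDl (v : op K V Ed) : {morph (@opscale K V Ed)^~ v : a b / a + b}.
Proof. by move=> a b; apply: op_ext => f q n /=; rewrite /fadd mulrDl. Qed.
End RepLmod.

HB.instance Definition _ (K : fieldType) (V : Type) (Ed : eqType) :=
  GRing.Zmodule_isLmodule.Build K (op K V Ed) (@opscaleA K V Ed) (@opscale1 K V Ed)
    (@opscaleDr K V Ed) (@opscaleDl K V Ed).


Lemma opf_add (K : fieldType) V (Ed : eqType) (x y : op K V Ed) f q n :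
  opf (x + y) f q n = opf x f q n + opf y f q n.
Proof. by []. Qed.
Lemma opf_opp (K : fieldType) V (Ed : eqType) (x : op K V Ed) f q n :
  opf (- x) f q n = - opf x f q n.
Proof. by []. Qed.
Lemma opf_zero (K : fieldType) V (Ed : eqType) f q n :
  opf (0 : op K V Ed) f q n = 0.
Proof. by []. Qed.
Lemma opf_sum (K : fieldType) V (Ed : eqType) (I : Type) (es : seq I) (F : I -> op K V Ed) f q n :
  opf (\sum_(i <- es) F i) f q n = \sum_(i <- es) opf (F i) f q n.
Proof.
elim: es => [|i es IH]; first by rewrite !big_nil.
by rewrite !big_cons opf_add IH.
Qed.

Section RepOps.
Variables (K : fieldType) (V : Type) (Ed : eqType) (s r : Ed -> V).
Local Notation bp := (bp V Ed).
Local Notation op := (op K V Ed).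

CoInductive G : V -> bp -> Prop :=
| GStop v : (forall e, s e <> v) -> G v (Stop Ed v)
| GCons v e q : s e = v -> G (r e) q -> G v (Cons e q).

Lemma G_cons v e q : G v (Cons e q) <-> s e = v /\ G (r e) q.
Proof.
split.
- move=> H; refine (match H in G v' q' return
      (match q' with Cons e' q'' => s e' = v' /\ G (r e') q'' | Stop _ => True end) with
    | GStop _ _ => I | GCons _ _ _ h1 h2 => conj h1 h2 end).
- intros [H1 H2]. apply: GCons; assumption.
Qed.

Lemma G_stop v w : G v (Stop Ed w) -> w = v /\ forall e, s e <> v.
Proof.
move=> H; refine (match H in G v' q' return
      (match q' with Stop w' => w' = v' /\ forall e, s e <> v' | Cons _ _ => True end) with
    | GStop _ h => conj erefl h | GCons _ _ _ h1 h2 => I end).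
Qed.

Lemma G_uniq v w q : G v q -> G w q -> v = w.
Proof.
case: q => [x|e q].
  by move=> /G_stop [-> _] /G_stop [-> _].
by move=> /G_cons [<- _] /G_cons [<- _].
Qed.

Definition ind (P : Prop) (x : K) : K := if pselect P then x else 0.

Lemma indE (P : Prop) (HP : P) x : ind P x = x.
Proof. by rewrite /ind; case: pselect. Qed.
Lemma indN (P : Prop) (HP : ~ P) x : ind P x = 0.
Proof. by rewrite /ind; case: pselect. Qed.

Definition vopf (v : V) (f : Fn K V Ed) : Fn K V Ed := fun q n => ind (G v q) (f q n).
Definition eopf (e : Ed) (f : Fn K V Ed) : Fn K V Ed := fun q n =>
  match q with Stop _ => 0 | Cons e' q' => ind (e' = e /\ G (r e) q') (f q' (n - 1)) end.
Definition esopf (e : Ed) (f : Fn K V Ed) : Fn K V Ed := fun q n =>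
  ind (G (r e) q) (f (Cons e q) (n + 1)).

Program Definition vop (v : V) : op := @Op K V Ed (vopf v) _ _.
Next Obligation.
apply: functional_extensionality_dep => q; apply: functional_extensionality_dep => n.
by rewrite /vopf /fadd /ind; case: pselect => Hps; rewrite ?addr0.
Qed.
Next Obligation.
apply: functional_extensionality_dep => q; apply: functional_extensionality_dep => n.
by rewrite /vopf /fscale /ind; case: pselect => Hps; rewrite ?mulr0.
Qed.

Program Definition eop (e : Ed) : op := @Op K V Ed (eopf e) _ _.
Next Obligation.
apply: functional_extensionality_dep => q; apply: functional_extensionality_dep => n.
case: q => [w|e' q']; rewrite /eopf /fadd ?addr0 // /ind; case: pselect => Hps; rewrite ?addr0 //.
Qed.
Next Obligation.
apply: functional_extensionality_dep => q; apply: functional_extensionality_dep => n.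
case: q => [w|e' q']; rewrite /eopf /fscale ?mulr0 // /ind; case: pselect => Hps; rewrite ?mulr0 //.
Qed.

Program Definition esop (e : Ed) : op := @Op K V Ed (esopf e) _ _.
Next Obligation.
apply: functional_extensionality_dep => q; apply: functional_extensionality_dep => n.
by rewrite /esopf /fadd /ind; case: pselect => Hps; rewrite ?addr0.
Qed.
Next Obligation.
apply: functional_extensionality_dep => q; apply: functional_extensionality_dep => n.
by rewrite /esopf /fscale /ind; case: pselect => Hps; rewrite ?mulr0.
Qed.

Lemma vopE v f q n : opf (vop v) f q n = ind (G v q) (f q n). Proof. by []. Qed.
Lemma eopC e f e' q' n : opf (eop e) f (Cons e' q') n = ind (e' = e /\ G (r e) q') (f q' (n - 1)).
Proof. by []. Qed.
Lemma eopS e f w n : opf (eop e) f (Stop Ed w) n = 0. Proof. by []. Qed.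
Lemma esopE e f q n : opf (esop e) f q n = ind (G (r e) q) (f (Cons e q) (n + 1)).
Proof. by []. Qed.
Lemma opf_mul (x y : op) f : opf (opmul x y) f = opf x (opf y f). Proof. by []. Qed.

Definition opm := @opmul K V Ed.

Lemma op_nalg : nalg_axioms opm.
Proof.
split.
- by move=> x y z; apply: op_ext.
- by move=> x y z; apply: op_ext.
- by move=> x y z; apply: op_ext => f q n /=; rewrite opD.
- by move=> k x y; apply: op_ext.
- by move=> k x y; apply: op_ext => f q n /=; rewrite opZ.
Qed.

Lemma sum_single (I : eqType) (es : seq I) (F : I -> K) i0 : uniq es ->
  (forall i, i != i0 -> F i = 0) -> \sum_(i <- es) F i = if i0 \in es then F i0 else 0.
Proof.
move=> U HF; elim: es U => [|i es IH] /=; first by rewrite big_nil.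
move=> /andP [Ni U]; rewrite big_cons IH // in_cons.
case: (eqVneq i0 i) => [E|N] /=.
  by subst i0; rewrite (negbTE Ni) addr0.
by rewrite HF ?add0r // eq_sym.
Qed.

Lemma ind0 (P : Prop) : ind P 0 = 0.
Proof. by rewrite /ind; case: pselect. Qed.

Lemma op_leavitt : leavitt_family s r opm vop eop esop.
Proof.
split; [|split; [|split; [|split; [|split; [|split]]]]].
- move=> v; apply: op_ext => f q n; rewrite /= /vopf /eopf /esopf.
  by case: (pselect (G v q)) => H; [rewrite !(indE H) | rewrite !(indN H)].
- move=> v w Nvw; apply: op_ext => f q n; rewrite /= /vopf /eopf /esopf.
  case: (pselect (G v q)) => H1; last by rewrite !(indN H1).
  case: (pselect (G w q)) => H2; last by rewrite !(indN H2) ind0.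
  by case: Nvw; apply: G_uniq H1 H2.
- move=> e; split; apply: op_ext => f [w|e' q'] n; rewrite /= /vopf /eopf /esopf; rewrite ?ind0 //.
  + case: (pselect (e' = e /\ G (r e) q')) => [[E Hq]|Hn]; last by rewrite !(indN Hn) ind0.
    subst e'; rewrite !(indE (conj (erefl e) Hq)).
    by rewrite !(indE ((G_cons _ _ _).2 (conj (erefl (s e)) Hq))).
  + case: (pselect (e' = e /\ G (r e) q')) => [[E Hq]|Hn]; last by rewrite !(indN Hn).
    by subst e'; rewrite !(indE (conj (erefl e) Hq)) !(indE Hq).
- move=> e; split; apply: op_ext => f q n; rewrite /= /vopf /eopf /esopf.
  + by case: (pselect (G (r e) q)) => H; [rewrite !(indE H) | rewrite !(indN H)].
  + case: (pselect (G (r e) q)) => H; last by rewrite !(indN H).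
    by rewrite !(indE H) !(indE ((G_cons _ _ _).2 (conj (erefl (s e)) H))).
- move=> e; apply: op_ext => f q n; rewrite /= /vopf /eopf /esopf.
  case: (pselect (G (r e) q)) => H; last by rewrite !(indN H).
  by rewrite !(indE H) !(indE (conj (erefl e) H)) addrK.
- move=> e g Neg; apply: op_ext => f q n; rewrite /= /vopf /eopf /esopf.
  by rewrite (@indN (e = g /\ _)) ?ind0 //; case.
- move=> v es U Hes Ne; apply: op_ext => f q n; rewrite opf_sum /= /vopf /eopf /esopf.
  case: q => [w|e' q'].
    rewrite big1 //; case: (pselect (G v (Stop Ed w))) => H; last by rewrite !(indN H).
    have [_ Hs] := G_stop H.
    by case: es U Hes Ne => [//|e0 es0] _ Hes _; case: (Hs e0); apply/Hes; rewrite in_cons eqxx.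
  rewrite (@sum_single _ _ _ e') //.
    case: (pselect (G v (Cons e' q'))) => H.
      have [He' Hq] := (G_cons _ _ _).1 H.
      have -> : e' \in es by apply/Hes.
      by rewrite !(indE H) !(indE (conj (erefl e') Hq)) !(indE Hq) subrK.
    rewrite !(indN H); case: ifP => // Hin.
    case: (pselect (e' = e' /\ G (r e') q')) => [[_ Hq]|Hn]; last by rewrite !(indN Hn).
    by case: H; apply/G_cons; split=> //; apply/Hes.
  move=> i Ni; rewrite (@indN (e' = i /\ _)) //; case=> E _.
  by move: Ni; rewrite E eqxx.
Qed.


Definition ch (v : V) : option Ed :=
  match pselect (exists e, s e = v) with
  | left H => Some (proj1_sig (cid H))
  | right _ => None end.

Lemma chP v : match ch v with Some e => s e = v | None => forall e, s e <> v end.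
Proof.
rewrite /ch; case: pselect => [H|H]; first by case: (cid H).
by move=> e E; apply: H; exists e.
Qed.

CoFixpoint pfrom (v : V) : bp :=
  match ch v with Some e => Cons e (pfrom (r e)) | None => Stop Ed v end.

Definition frob (q : bp) : bp := match q with Stop v => Stop Ed v | Cons e q' => Cons e q' end.
Lemma frobE q : frob q = q. Proof. by case: q. Qed.

Lemma pfromE v : pfrom v = match ch v with Some e => Cons e (pfrom (r e)) | None => Stop Ed v end.
Proof. by rewrite -[LHS]frobE /=; case: (ch v). Qed.

Lemma G_coind (P : V -> bp -> Prop) :
  (forall v q, P v q -> match q with
     | Stop w => w = v /\ (forall e, s e <> v)
     | Cons e q' => s e = v /\ P (r e) q' end) ->
  forall v q, P v q -> G v q.
Proof.
intro H; cofix CIH; intros v q HP.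
destruct q as [w|e q'].
- destruct (H _ _ HP) as [E Hs]. rewrite E. exact (GStop Hs).
- destruct (H _ _ HP) as [E HP']. exact (GCons E (CIH _ _ HP')).
Qed.

Lemma G_pfrom v : G v (pfrom v).
Proof.
apply: (@G_coind (fun v q => q = pfrom v)) => // v0 q ->.
rewrite pfromE; have := chP v0; case: (ch v0) => [e|] H //.
Qed.

Lemma vop_ne0 w : vop w <> 0.
Proof.
move=> H; have := congr1 (fun x => opf x (fun _ _ => 1) (pfrom w) 0) H.
by rewrite vopE (indE (G_pfrom w)) => /eqP; rewrite oner_eq0.
Qed.

Lemma opf_iter m (S X : op) f : opf (iter m (opm S) X) f = iter m (opf S) (opf X f).
Proof. by elim: m => [//|m IH] /=; rewrite IH. Qed.

Lemma shift_iter (T T' X : op) q0 (d : int) : 0 < d ->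
  (forall f n, opf T f q0 n = f q0 (n - d)) ->
  (forall f n, opf T' f q0 n = f q0 (n + d)) ->
  (forall f n, opf X f q0 n = f q0 n) ->
  forall m, iter m (opm (T - T')) X <> 0.
Proof.
move=> Hd HT HT' HX m.
pose del : Fn K V Ed := fun q n => if n == 0 then 1 else 0.
have step : forall (psi : Fn K V Ed) (N : int), (forall j, N < j -> psi q0 j = 0) -> psi q0 N = 1 ->
    (forall j, N + d < j -> opf (T - T') psi q0 j = 0) /\ opf (T - T') psi q0 (N + d) = 1.
  move=> psi N H0 H1; split.
  - move=> j Hj; rewrite opf_add opf_opp HT HT' !H0 ?subr0 //; lia.
  - rewrite opf_add opf_opp HT HT' addrK H1 H0 ?subr0 //; lia.
have main : forall m, (forall j, d *+ m < j -> opf (iter m (opm (T - T')) X) del q0 j = 0) /\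
    opf (iter m (opm (T - T')) X) del q0 (d *+ m) = 1.
  elim=> [|k [IH0 IH1]].
    split; first by move=> j Hj /=; rewrite HX /del; case: eqP => // E; move: Hj; rewrite E ltxx.
    by rewrite /= HX /del eqxx.
  have [S0 S1] := step _ _ IH0 IH1.
  by rewrite mulrSr; split.
move=> E; have [_ M] := main m; move: M; rewrite E /= => /eqP; by rewrite eq_sym oner_eq0.
Qed.

Lemma S1_ne (e f : Ed) (w : V) : s e = w -> r e = w -> (forall g, s g = w -> g = e) ->
  r f = w -> s f <> w ->
  forall m, iter m (opm ((eop e + opm (opm (eop f) (eop e)) (esop f)) -
         (esop e + opm (eop f) (opm (esop e) (esop f))))) (vop w) <> 0.
Proof.
move=> Hse Hre Hu Hrf Hsf.
have Nef : e <> f by move=> E; apply: Hsf; rewrite -E.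
have [q0 [Gq0 Eq0]] : exists q0, G w q0 /\ q0 = Cons e q0.
  exists (pfrom w); split; first exact: G_pfrom.
  rewrite {1}pfromE; have := chP w; case: (ch w) => [g Hg|H].
    by rewrite (Hu g Hg) Hre.
  by case: (H e).
have Gre : G (r e) q0 by rewrite Hre.
have Z : forall h0 k, opf (eop f) h0 q0 k = 0.
  by move=> h0 k; rewrite {1}Eq0 eopC (@indN (e = f /\ _)) //; case.
apply: (@shift_iter _ _ _ q0 1) => // g n.
- by rewrite opf_add !opf_mul Z addr0 {1}Eq0 eopC (indE (conj (erefl e) Gre)).
- by rewrite opf_add !opf_mul Z addr0 esopE (indE Gre) -Eq0.
- by rewrite vopE (indE Gq0).
Qed.

Lemma S2_ne (e f : Ed) (u v : V) : s e = u -> r e = v -> s f = v -> r f = u -> u <> v ->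
  (forall g, s g = u -> g = e) -> (forall g, s g = v -> g = f) ->
  forall m, iter m (opm ((opm (eop e) (eop f) + opm (eop f) (eop e)) -
         (opm (esop f) (esop e) + opm (esop e) (esop f)))) (vop v) <> 0.
Proof.
move=> Hse Hre Hsf Hrf Nuv Hu Hv.
have Nfe : f <> e by move=> E; apply: Nuv; rewrite -Hse -Hsf E.
have [q0 [q1 [Gq0 [Gq1 [Eq0 Eq1]]]]] : exists q0 q1, G v q0 /\ G u q1 /\
    q0 = Cons f q1 /\ q1 = Cons e q0.
  exists (pfrom v), (pfrom u); split; first exact: G_pfrom.
  split; first exact: G_pfrom.
  split.
    rewrite {1}pfromE; have := chP v; case: (ch v) => [g Hg|H].
      by rewrite (Hv g Hg) Hrf.
    by case: (H f).
  rewrite {1}pfromE; have := chP u; case: (ch u) => [g Hg|H].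
    by rewrite (Hu g Hg) Hre.
  by case: (H e).
have Gre : G (r e) q0 by rewrite Hre.
have Grf : G (r f) q1 by rewrite Hrf.
have Z1 : forall h0 k, opf (eop e) h0 q0 k = 0.
  by move=> h0 k; rewrite {1}Eq0 eopC (@indN (f = e /\ _)) //; case.
have Z2 : forall h0 k, opf (esop f) h0 q0 k = 0.
  move=> h0 k; rewrite esopE (@indN (G (r f) q0)) //.
  rewrite Hrf Eq0 => /G_cons [E _]; by apply: Nuv; rewrite -E Hsf.
apply: (@shift_iter _ _ _ q0 2) => // g n.
- rewrite opf_add !opf_mul Z1 add0r {1}Eq0 eopC (indE (conj (erefl f) Grf)).
  rewrite {1}Eq1 eopC (indE (conj (erefl e) Gre)).
  by congr (g q0 _); lia.
- rewrite opf_add !opf_mul Z2 add0r esopE (indE Gre) esopE.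
  have Gc : G (r f) (Cons e q0) by rewrite -Eq1.
  rewrite (indE Gc) -Eq1 -Eq0.
  by congr (g q0 _); lia.
- by rewrite vopE (indE Gq0).
Qed.

End RepOps.

Section Basics.
Variables (K : fieldType) (V : Type) (Ed : eqType) (s r : Ed -> V)
  (A : lmodType K) (mul : A -> A -> A) (vA : V -> A) (eA esA : Ed -> A)
  (star : A -> A).
Hypothesis Hn : nalg_axioms mul.
Local Notation "x ** y" := (mul x y) (at level 40, left associativity).

Lemma mulA x y z : x ** (y ** z) = x ** y ** z. Proof. by case: Hn. Qed.
Lemma mulDl x y z : (x + y) ** z = x ** z + y ** z. Proof. by case: Hn. Qed.
Lemma mulDr x y z : x ** (y + z) = x ** y + x ** z. Proof. by case: Hn. Qed.
Lemma mulZl k x y : (k *: x) ** y = k *: (x ** y). Proof. by case: Hn. Qed.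
Lemma mulZr k x y : x ** (k *: y) = k *: (x ** y). Proof. by case: Hn. Qed.
Lemma mul0l y : 0 ** y = 0.
Proof. by rewrite -(scale0r (0:A)) mulZl !scale0r. Qed.
Lemma mul0r y : y ** 0 = 0.
Proof. by rewrite -(scale0r (0:A)) mulZr !scale0r. Qed.
Lemma mulNl x y : (- x) ** y = - (x ** y).
Proof. by rewrite -scaleN1r mulZl scaleN1r. Qed.
Lemma mulNr x y : x ** (- y) = - (x ** y).
Proof. by rewrite -scaleN1r mulZr scaleN1r. Qed.
Lemma mulBl x y z : (x - y) ** z = x ** z - y ** z.
Proof. by rewrite mulDl mulNl. Qed.
Lemma mulBr x y z : x ** (y - z) = x ** y - x ** z.
Proof. by rewrite mulDr mulNr. Qed.

Hypothesis Hl : leavitt_family s r mul vA eA esA.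
Lemma vv v : vA v ** vA v = vA v. Proof. by case: Hl. Qed.
Lemma vv0 v w : v <> w -> vA v ** vA w = 0. Proof. by case: Hl => _ [H _]; apply: H. Qed.
Lemma sE e : vA (s e) ** eA e = eA e. Proof. by case: Hl => _ [_ [H _]]; case: (H e). Qed.
Lemma Er e : eA e ** vA (r e) = eA e. Proof. by case: Hl => _ [_ [H _]]; case: (H e). Qed.
Lemma rS e : vA (r e) ** esA e = esA e. Proof. by case: Hl => _ [_ [_ [H _]]]; case: (H e). Qed.
Lemma Ss e : esA e ** vA (s e) = esA e. Proof. by case: Hl => _ [_ [_ [H _]]]; case: (H e). Qed.
Lemma SE e : esA e ** eA e = vA (r e). Proof. by case: Hl => _ [_ [_ [_ [H _]]]]; apply: H. Qed.
Lemma SEne e f : e <> f -> esA e ** eA f = 0.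
Proof. by case: Hl => _ [_ [_ [_ [_ [H _]]]]]; apply: H. Qed.
Lemma CK v es : uniq es -> (forall e, s e = v <-> e \in es) -> es <> [::] ->
  vA v = \sum_(e <- es) eA e ** esA e.
Proof. by case: Hl => _ [_ [_ [_ [_ [_ H]]]]]; apply: H. Qed.

Lemma CK1 v e : (forall g, s g = v <-> g = e) -> vA v = eA e ** esA e.
Proof.
move=> H; rewrite (@CK v [:: e]) ?big_seq1 //.
move=> g; rewrite mem_seq1; split; first by move/H => ->.
by move/eqP/H.
Qed.

Lemma mism x y a b : x = x ** vA a -> y = vA b ** y -> a <> b -> x ** y = 0.
Proof.
move=> Hx Hy Hab; rewrite Hx Hy mulA -(mulA x) vv0 //.
by rewrite mul0r mul0l.
Qed.

Hypothesis Hst : standard_involution mul vA eA esA star.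
Lemma starD x y : star (x + y) = star x + star y. Proof. by case: Hst. Qed.
Lemma starZ k x : star (k *: x) = k *: star x. Proof. by case: Hst => _ []. Qed.
Lemma starM x y : star (x ** y) = star y ** star x. Proof. by case: Hst => _ [_ []]. Qed.
Lemma starK x : star (star x) = x. Proof. by case: Hst => _ [_ [_ []]]. Qed.
Lemma starV v : star (vA v) = vA v. Proof. by case: Hst => _ [_ [_ [_ []]]]. Qed.
Lemma starE e : star (eA e) = esA e. Proof. by case: Hst => _ [_ [_ [_ [_ []]]]]. Qed.
Lemma starS e : star (esA e) = eA e. Proof. by case: Hst => _ [_ [_ [_ [_ [_ H]]]]]. Qed.
Lemma star0 : star 0 = 0. Proof. by rewrite -(scale0r (0:A)) starZ !scale0r. Qed.
Lemma starN x : star (- x) = - star x. Proof. by rewrite -scaleN1r starZ scaleN1r. Qed.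
Lemma starB x y : star (x - y) = star x - star y. Proof. by rewrite starD starN. Qed.


Section Part1.
Hypothesis F1 : forall l g, s l = r l -> (s g = s l \/ r g = s l) -> g = l.
Hypothesis F2 : forall e, s e <> r e ->
  (forall g, s g <> r e) /\ (forall g, r g <> s e) /\ (forall g, r g = r e -> g = e).

Inductive Gl (l : Ed) : A -> Prop :=
| Gl_v : Gl l (vA (s l))
| Gl_e : Gl l (eA l)
| Gl_s : Gl l (esA l)
| Gl_0 : Gl l 0
| Gl_add x y : Gl l x -> Gl l y -> Gl l (x + y)
| Gl_scale k x : Gl l x -> Gl l (k *: x)
| Gl_mul x y : Gl l x -> Gl l y -> Gl l (x ** y).

Lemma Gl_sub l x y : Gl l x -> Gl l y -> Gl l (x - y).
Proof. by move=> Hx Hy; rewrite -scaleN1r; apply: Gl_add => //; apply: Gl_scale. Qed.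

Lemma Gl_lr l x : s l = r l -> Gl l x -> vA (s l) ** x = x /\ x ** vA (s l) = x.
Proof.
move=> Hl0; elim=> {x}.
- by rewrite vv.
- by rewrite sE Hl0 Er.
- by rewrite {1}Hl0 rS Ss.
- by rewrite mul0l mul0r.
- by move=> x y _ [H1 H2] _ [H3 H4]; rewrite mulDl mulDr H1 H2 H3 H4.
- by move=> k x _ [H1 H2]; rewrite mulZl mulZr H1 H2.
- by move=> x y _ [H1 H2] _ [H3 H4]; rewrite mulA H1 -mulA H4.
Qed.

Lemma Gl_star l x : Gl l x -> Gl l (star x).
Proof.
elim=> {x}.
- rewrite starV; exact: Gl_v.
- rewrite starE; exact: Gl_s.
- rewrite starS; exact: Gl_e.
- rewrite star0; exact: Gl_0.
- by move=> x y _ H1 _ H2; rewrite starD; apply: Gl_add.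
- by move=> k x _ H1; rewrite starZ; apply: Gl_scale.
- by move=> x y _ H1 _ H2; rewrite starM; apply: Gl_mul.
Qed.

Lemma comm_ext l x : (forall g, (g = vA (s l) \/ g = eA l \/ g = esA l) -> x ** g = g ** x) ->
  forall y, Gl l y -> x ** y = y ** x.
Proof.
move=> Hg y; elim=> {y}.
- by apply: Hg; left.
- by apply: Hg; right; left.
- by apply: Hg; right; right.
- by rewrite mul0l mul0r.
- by move=> y z _ H1 _ H2; rewrite mulDl mulDr H1 H2.
- by move=> k y _ H1; rewrite mulZl mulZr H1.
- by move=> y z _ H1 _ H2; rewrite mulA H1 -mulA H2 mulA.
Qed.

Lemma loopCK l : s l = r l -> vA (s l) = eA l ** esA l.
Proof.
move=> Hl0; apply: CK1 => g; split; last by move->.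
by move=> H; apply: F1 => //; left.
Qed.

Lemma Gl_comm l x y : s l = r l -> Gl l x -> Gl l y -> x ** y = y ** x.
Proof.
move=> Hl0 Hx Hy.
have Hgg : forall g h, (g = vA (s l) \/ g = eA l \/ g = esA l) ->
    (h = vA (s l) \/ h = eA l \/ h = esA l) -> g ** h = h ** g.
  have H1 : vA (s l) ** eA l = eA l ** vA (s l) by rewrite sE Hl0 Er.
  have H2 : vA (s l) ** esA l = esA l ** vA (s l) by rewrite {1}Hl0 rS Ss.
  have H3 : eA l ** esA l = esA l ** eA l by rewrite SE -loopCK // Hl0.
  by move=> g h [->|[->|->]] [->|[->|->]].
have Hg : forall g, (g = vA (s l) \/ g = eA l \/ g = esA l) -> forall z, Gl l z -> g ** z = z ** g.
  by move=> g Hg0; apply: comm_ext => h Hh; apply: Hgg.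
apply: comm_ext Hy => g Hg0; symmetry; exact: Hg.
Qed.

Definition Piece p := (exists l, s l = r l /\ Gl l p) \/ (exists v, p = vA v) \/
  (exists e, s e <> r e /\ (p = eA e \/ p = esA e \/ p = eA e ** esA e)).

Lemma kspan_piece_mul p q : Piece p -> Piece q -> kspan Piece (p ** q).
Proof.
have Z : forall x y a b, x = x ** vA a -> y = vA b ** y -> a <> b -> kspan Piece (x ** y).
  by move=> x y a b Hx Hy Hab; rewrite (mism Hx Hy Hab); apply: kspan_0.
have PG : forall l x, s l = r l -> Gl l x -> Piece x by move=> l x H1 H2; left; exists l.
have PV : forall v, Piece (vA v) by move=> v; right; left; exists v.
have PE : forall e, s e <> r e -> Piece (eA e) by move=> e H; right; right; exists e; split=> //; left.
have PS : forall e, s e <> r e -> Piece (esA e) by move=> e H; right; right; exists e; split=> //; right; left.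
have PP : forall e, s e <> r e -> Piece (eA e ** esA e).
  by move=> e H; right; right; exists e; split=> //; right; right.
have rG : forall l x, s l = r l -> Gl l x -> x = x ** vA (s l) by move=> l x H1 H2; case: (Gl_lr H1 H2).
have lG : forall l x, s l = r l -> Gl l x -> x = vA (s l) ** x by move=> l x H1 H2; case: (Gl_lr H1 H2).
have rE : forall e, eA e = eA e ** vA (r e) by move=> e; rewrite Er.
have lE : forall e, eA e = vA (s e) ** eA e by move=> e; rewrite sE.
have rS' : forall e, esA e = esA e ** vA (s e) by move=> e; rewrite Ss.
have lS : forall e, esA e = vA (r e) ** esA e by move=> e; rewrite rS.
have rP : forall e, eA e ** esA e = eA e ** esA e ** vA (s e) by move=> e; rewrite -mulA Ss.
have lP : forall e, eA e ** esA e = vA (s e) ** (eA e ** esA e) by move=> e; rewrite mulA sE.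
have Hlv : forall q, Piece q -> exists b, q = vA b ** q.
  move=> q0 [[l [H1 H2]]|[[v ->]|[e [He [->|[->|->]]]]]].
  - by exists (s l); apply: lG.
  - by exists v; rewrite vv.
  - by exists (s e).
  - by exists (r e).
  - by exists (s e).
have Hrv : forall q, Piece q -> exists b, q = q ** vA b.
  move=> q0 [[l [H1 H2]]|[[v ->]|[e [He [->|[->|->]]]]]].
  - by exists (s l); apply: rG.
  - by exists v; rewrite vv.
  - by exists (r e).
  - by exists (s e).
  - by exists (s e).
move=> Hp Hq.
case: (Hp) => [|[[v Ev]|]].
2: { case: (Hlv q Hq) => b Hb; case: (pselect (v = b)) => [Evb|Nvb].
     - by rewrite Ev Evb -Hb; apply: kspan_gen.
     - by apply: (Z _ _ v b) => //; rewrite Ev vv. }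
all: case: (Hq) => [|[[v Ev]|]].
2,5: by move=> _; case: (Hrv p Hp) => b Hb; case: (pselect (v = b)) => [Evb|Nvb];
     [rewrite Ev Evb -Hb; apply: kspan_gen | apply: (Z _ _ b v) => //;
      [rewrite Ev vv | move=> H; apply: Nvb]].
- move=> [l' [Hll' Gq]] [l [Hll Gp]].
  case: (pselect (s l = s l')) => [E|N]; last by apply: (Z _ _ _ _ (rG _ _ Hll Gp) (lG _ _ Hll' Gq)).
  have El : l' = l by apply: F1 => //; left.
  by subst l'; apply: kspan_gen; left; exists l; split=> //; apply: Gl_mul.
- move=> [f [Hf Hq0]] [l [Hll Gp]].
  case: Hq0 => [->|[->|->]].
  + apply: (Z _ _ _ _ (rG _ _ Hll Gp) (lE f)) => E.
    by apply: Hf; rewrite (F1 Hll (or_introl (esym E))).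
  + apply: (Z _ _ _ _ (rG _ _ Hll Gp) (lS f)) => E.
    by apply: Hf; rewrite (F1 Hll (or_intror (esym E))).
  + apply: (Z _ _ _ _ (rG _ _ Hll Gp) (lP f)) => E.
    by apply: Hf; rewrite (F1 Hll (or_introl (esym E))).
- move=> [l [Hll Gq]] [e [He Hp0]].
  case: Hp0 => [->|[->|->]].
  + apply: (Z _ _ _ _ (rE e) (lG _ _ Hll Gq)) => E.
    by apply: He; rewrite (F1 Hll (or_intror E)).
  + apply: (Z _ _ _ _ (rS' e) (lG _ _ Hll Gq)) => E.
    by apply: He; rewrite (F1 Hll (or_introl E)).
  + apply: (Z _ _ _ _ (rP e) (lG _ _ Hll Gq)) => E.
    by apply: He; rewrite (F1 Hll (or_introl E)).
- move=> [f [Hf Hq0]] [e [He Hp0]].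
  have [Fe1 [Fe2 Fe3]] := F2 He.
  case: Hp0 => [->|[->|->]]; case: Hq0 => [->|[->|->]].
  + by apply: (Z _ _ _ _ (rE e) (lE f)) => E; apply: (Fe1 f).
  + case: (pselect (r e = r f)) => [E|N]; last by apply: (Z _ _ _ _ (rE e) (lS f)).
    by rewrite (Fe3 f (esym E)); apply: kspan_gen; apply: PP.
  + by apply: (Z _ _ _ _ (rE e) (lP f)) => E; apply: (Fe1 f).
  + case: (eqVneq e f) => [<-|N]; first by rewrite SE; apply: kspan_gen.
    by rewrite SEne; [apply: kspan_0 | exact/eqP].
  + by apply: (Z _ _ _ _ (rS' e) (lS f)) => E; apply: (Fe2 f).
  + rewrite mulA; case: (eqVneq e f) => [<-|N]; first by rewrite SE rS; apply: kspan_gen; apply: PS.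
    by rewrite SEne ?mul0l; [apply: kspan_0 | exact/eqP].
  + rewrite -mulA; case: (eqVneq e f) => [<-|N]; first by rewrite SE Er; apply: kspan_gen; apply: PE.
    by rewrite SEne ?mul0r; [apply: kspan_0 | exact/eqP].
  + by apply: (Z _ _ _ _ (rP e) (lS f)) => E; apply: (Fe2 f).
  + rewrite mulA -(mulA (eA e)); case: (eqVneq e f) => [<-|N].
      by rewrite SE Er; apply: kspan_gen; apply: PP.
    by rewrite SEne ?mul0r ?mul0l; [apply: kspan_0 | exact/eqP].
Qed.

Lemma kspan_mul_l (P : A -> Prop) x : (forall y, P y -> kspan P (x ** y)) ->
  forall y, kspan P y -> kspan P (x ** y).
Proof.
move=> H y; elim=> {y} [y Hy| |y z _ H1 _ H2| k y _ H1].
- exact: H.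
- rewrite mul0r; exact: kspan_0.
- rewrite mulDr; exact: kspan_add.
- rewrite mulZr; exact: kspan_scale.
Qed.

Lemma kspan_Piece_mul x y : kspan Piece x -> kspan Piece y -> kspan Piece (x ** y).
Proof.
move=> Hx Hy; elim: Hx => {x} [x Hx| |x1 x2 _ H1 _ H2| k x _ H1].
- by apply: kspan_mul_l Hy => z Hz; apply: kspan_piece_mul.
- rewrite mul0l; exact: kspan_0.
- rewrite mulDl; exact: kspan_add.
- rewrite mulZl; exact: kspan_scale.
Qed.

Hypothesis Hgen : generated_by mul vA eA esA.

Lemma all_span x : kspan Piece x.
Proof.
refine (@Hgen (kspan Piece) _ _ _ _ _ _ _ x).
- by move=> v; apply: kspan_gen; right; left; exists v.
- move=> e; apply: kspan_gen; case: (pselect (s e = r e)) => H.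
    by left; exists e; split=> //; apply: Gl_e.
  by right; right; exists e; split=> //; left.
- move=> e; apply: kspan_gen; case: (pselect (s e = r e)) => H.
    by left; exists e; split=> //; apply: Gl_s.
  by right; right; exists e; split=> //; right; left.
- exact: kspan_0.
- by move=> *; apply: kspan_add.
- by move=> *; apply: kspan_scale.
- by move=> *; apply: kspan_Piece_mul.
Qed.

Definition Qs y := (exists l, s l = r l /\ Gl l y) \/ (exists e, s e <> r e /\ y = eA e - esA e).

Lemma piece_D p : Piece p -> kspan Qs (p - star p).
Proof.
move=> [[l [Hll Gp]]|[[v ->]|[e [He [->|[->|->]]]]]].
- by apply: kspan_gen; left; exists l; split=> //; apply: Gl_sub => //; apply: Gl_star.
- rewrite starV subrr; exact: kspan_0.
- by rewrite starE; apply: kspan_gen; right; exists e.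
- rewrite starS -opprB -scaleN1r; apply: kspan_scale.
  by apply: kspan_gen; right; exists e.
- rewrite starM starS starE subrr; exact: kspan_0.
Qed.

Lemma D_span x : kspan Piece x -> kspan Qs (x - star x).
Proof.
elim=> {x} [x Hx| |x y _ H1 _ H2| k x _ H1].
- exact: piece_D.
- rewrite star0 subrr; exact: kspan_0.
- have -> : x + y - star (x + y) = (x - star x) + (y - star y).
    by rewrite starD opprD addrACA.
  exact: kspan_add.
- by rewrite starZ -scalerBr; apply: kspan_scale.
Qed.

Lemma ZZ e f : s e <> r e -> s f <> r f -> e <> f ->
  [/\ eA e ** eA f = 0, eA e ** esA f = 0, esA e ** eA f = 0 & esA e ** esA f = 0].
Proof.
move=> He Hf Hne; have [Fe1 [Fe2 Fe3]] := F2 He.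
have rE : forall e, eA e = eA e ** vA (r e) by move=> e0; rewrite Er.
have lE : forall e, eA e = vA (s e) ** eA e by move=> e0; rewrite sE.
have rS' : forall e, esA e = esA e ** vA (s e) by move=> e0; rewrite Ss.
have lS : forall e, esA e = vA (r e) ** esA e by move=> e0; rewrite rS.
split.
- by apply: (mism (rE e) (lE f)) => E; apply: (Fe1 f).
- by apply: (mism (rE e) (lS f)) => E; apply: Hne; rewrite (Fe3 f (esym E)).
- exact: SEne.
- by apply: (mism (rS' e) (lS f)) => E; apply: (Fe2 f).
Qed.

Lemma GDz l x e : s l = r l -> Gl l x -> s e <> r e ->
  [/\ x ** eA e = 0, x ** esA e = 0, eA e ** x = 0 & esA e ** x = 0].
Proof.
move=> Hll Gx He.
have [H1 H2] := Gl_lr Hll Gx.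
have Nl : forall g, g = e -> (s g = s l \/ r g = s l) -> False.
  by move=> g -> Hg; have Eg := F1 Hll Hg; subst e; apply: He.
split.
- by apply: (mism (esym H2) (esym (sE e))) => E; apply: (Nl e erefl); left.
- by apply: (mism (esym H2) (esym (rS e))) => E; apply: (Nl e erefl); right.
- by apply: (mism (esym (Er e)) (esym H1)) => E; apply: (Nl e erefl); right.
- by apply: (mism (esym (Ss e)) (esym H1)) => E; apply: (Nl e erefl); left.
Qed.

Lemma Qs_comm x y : Qs x -> Qs y -> x ** y = y ** x.
Proof.
have GD : forall l x e, s l = r l -> Gl l x -> s e <> r e ->
    x ** (eA e - esA e) = (eA e - esA e) ** x.
  move=> l x0 e Hll Gx He; have [Z1 Z2 Z3 Z4] := GDz Hll Gx He.
  by rewrite mulBr mulBl Z1 Z2 Z3 Z4.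
move=> [[l [Hll Gx]]|[e [He ->]]] [[l' [Hll' Gy]]|[f [Hf ->]]].
- case: (pselect (s l = s l')) => [E|N].
    have El : l' = l by apply: F1 => //; left; rewrite E.
    subst l'; exact: (Gl_comm Hll Gx Gy).
  have [H1 H2] := Gl_lr Hll Gx; have [H3 H4] := Gl_lr Hll' Gy.
  rewrite (mism (esym H2) (esym H3) N) (mism (esym H4) (esym H1)) //.
  by move=> E; apply: N.
- exact: (GD _ _ _ Hll Gx Hf).
- by symmetry; apply: (GD _ _ _ Hll' Gy He).
- case: (eqVneq e f) => [->//|N].
  have [Z1 Z2 Z3 Z4] := ZZ He Hf (elimN eqP N).
  have [Z5 Z6 Z7 Z8] := ZZ Hf He (elimN eqP (contra_neq esym N)) .
  by rewrite !mulBr !mulBl Z1 Z2 Z3 Z4 Z5 Z6 Z7 Z8.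
Qed.

Lemma kspan_comm x y : kspan Qs x -> kspan Qs y -> x ** y = y ** x.
Proof.
have Hl1 : forall x y, Qs x -> kspan Qs y -> x ** y = y ** x.
  move=> x0 y0 Hx; elim=> {y0} [y1 Hy| |y1 z _ H1 _ H2| k y1 _ H1].
  - exact: Qs_comm.
  - by rewrite mul0l mul0r.
  - by rewrite mulDl mulDr H1 H2.
  - by rewrite mulZl mulZr H1.
move=> Hx Hy; elim: Hx => {x} [x Hx| |x z _ H1 _ H2| k x _ H1].
- exact: Hl1.
- by rewrite mul0l mul0r.
- by rewrite mulDl mulDr H1 H2.
- by rewrite mulZl mulZr H1.
Qed.

Lemma skew_comm (H2 : (2%:R : K) != 0) x y : star x = - x -> star y = - y -> x ** y = y ** x.
Proof.
move=> Hx Hy.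
have := kspan_comm (D_span (all_span x)) (D_span (all_span y)).
rewrite Hx Hy !opprK -!mulr2n -!scaler_nat.
rewrite !mulZl !mulZr !scalerA => /(congr1 (fun z => (2%:R * 2%:R)^-1 *: z)).
by rewrite !scalerA mulVf ?mulf_neq0 // !scale1r.
Qed.

Lemma part1 (H2 : (2%:R : K) != 0) :
  lie_nilpotent mul star /\ lie_solvable mul star.
Proof.
have H : forall x, lie_bracket_set mul (Defs.skew star) (Defs.skew star) x -> x = 0.
  move=> x; elim=> {x} [x [a [b [Ha [Hb Ex]]]]| |x y _ Ex _ Ey| k x _ Ex].
  - by rewrite Ex /lie_br (skew_comm H2 Ha Hb) subrr.
  - by [].
  - by rewrite Ex Ey addr0.
  - by rewrite Ex scaler0.
by split; exists 1%N.
Qed.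

End Part1.
Section Part2alg.
Local Notation skw := (Defs.skew star).

Lemma skew_br x y : skw x -> skw y -> skw (lie_br mul x y).
Proof.
rewrite /Defs.skew /lie_br => Hx Hy.
by rewrite starB !starM Hx Hy !mulNl !mulNr !opprK opprB.
Qed.

Lemma kspan_mono (G H : A -> Prop) : (forall x, G x -> H x) -> forall x, kspan G x -> kspan H x.
Proof.
move=> GH x; elim=> {x} [x Hx| |x y _ H1 _ H2| k x _ H1].
- by apply: kspan_gen; apply: GH.
- exact: kspan_0.
- exact: kspan_add.
- exact: kspan_scale.
Qed.

Lemma kspan_skew (G : A -> Prop) : (forall x, G x -> skw x) -> forall x, kspan G x -> skw x.
Proof.
move=> GH x; elim=> {x} [x Hx| |x y _ H1 _ H2| k x _ H1].
- exact: GH.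
- by rewrite /Defs.skew star0 oppr0.
- by rewrite /Defs.skew starD H1 H2 opprD.
- by rewrite /Defs.skew starZ H1 scalerN.
Qed.

Lemma lc_skew n x : lower_central mul star n x -> skw x.
Proof.
elim: n x => [//|n IH] x /=; apply: kspan_skew => y [a [b [Ha [Hb ->]]]].
by apply: skew_br => //; apply: IH.
Qed.

Lemma der_lc n x : derived mul star n x -> lower_central mul star n x.
Proof.
elim: n x => [//|n IH] x /=; apply: kspan_mono => y [a [b [Ha [Hb ->]]]].
exists a, b; split; first exact: IH.
by split=> //; apply: (@lc_skew n); apply: IH.
Qed.

Lemma notsolv : (forall n, exists x, derived mul star n x /\ x <> 0) ->
  ~ lie_solvable mul star /\ ~ lie_nilpotent mul star.
Proof.
move=> H; split.
- by move=> [n Hn0]; have [x [Hx Nx]] := H n; apply: Nx; apply: Hn0.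
- by move=> [n Hn0]; have [x [Hx Nx]] := H n; apply: Nx; apply: Hn0; apply: der_lc.
Qed.

Lemma amul (N : nat) (g : nat -> A) z :
  (forall i j, (i < N)%N -> (j < N)%N -> star (g i) ** g j = if i == j then z else 0) ->
  (forall i, (i < N)%N -> g i ** z = g i) ->
  forall i j k l, (i < N)%N -> (j < N)%N -> (k < N)%N ->
  (g i ** star (g j)) ** (g k ** star (g l)) = if j == k then g i ** star (g l) else 0.
Proof.
move=> Hg Hz i j k l Hi Hj Hk.
rewrite mulA -(mulA (g i)) Hg //; case: ifP => _; first by rewrite Hz.
by rewrite mul0r mul0l.
Qed.

Lemma U3 (g : nat -> A) z :
  (forall i j, (i < 3)%N -> (j < 3)%N -> star (g i) ** g j = if i == j then z else 0) ->
  (forall i, (i < 3)%N -> g i ** z = g i) -> z <> 0 ->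
  forall n, exists x, derived mul star n x /\ x <> 0.
Proof.
move=> Hg Hz Nz.
pose a i j := g i ** star (g j).
have am := amul Hg Hz.
have sa : forall i j, star (a i j) = a j i by move=> i j; rewrite /a starM starK.
pose X := a 0%N 1%N - a 1%N 0%N.
pose Y := a 1%N 2%N - a 2%N 1%N.
pose Z := a 0%N 2%N - a 2%N 0%N.
have sk : forall i j, skw (a i j - a j i) by move=> i j; rewrite /Defs.skew starB !sa opprB.
have B1 : lie_br mul X Y = Z.
  rewrite /lie_br /X /Y /Z /a !mulBl !mulBr !am //=.
  rewrite !(subr0, sub0r, opprK, opprB, addr0, add0r); try done; by rewrite addrC.
have B2 : lie_br mul Y Z = X.
  rewrite /lie_br /X /Y /Z /a !mulBl !mulBr !am //=.
  rewrite !(subr0, sub0r, opprK, opprB, addr0, add0r); try done; by rewrite addrC.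
have B3 : lie_br mul Z X = Y.
  rewrite /lie_br /X /Y /Z /a !mulBl !mulBr !am //=.
  rewrite !(subr0, sub0r, opprK, opprB, addr0, add0r); try done; by rewrite addrC.
have D : forall n, derived mul star n X /\ derived mul star n Y /\ derived mul star n Z.
  elim=> [|n [HX [HY HZ]]] /=; first by split; [apply: sk | split; apply: sk].
  split; last split; apply: kspan_gen.
  - by exists Y, Z.
  - by exists Z, X.
  - by exists X, Y.
move=> n; exists X; split; first by case: (D n).
move=> X0; apply: Nz.
have : a 0%N 0%N ** X ** a 1%N 1%N = a 0%N 1%N.
  by rewrite /X /a mulBr mulBl !am //= mul0l subr0.
rewrite X0 mul0r mul0l => /(congr1 (fun w => star (g 0%N) ** w ** g 1%N)).
rewrite mul0r mul0l /a mulA Hg // -mulA Hg //= => E.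
have zz : z ** z = z.
  have H00 : star (g 0%N) ** g 0%N = z by rewrite Hg.
  by rewrite -{1}H00 -mulA Hz.
by rewrite E zz.
Qed.

Definition spw (sv : A) m x := iter m (mul sv) x.

Lemma spwS sv m x : spw sv m.+1 x = sv ** spw sv m x. Proof. by []. Qed.
Lemma spwM sv m x y : spw sv m x ** y = spw sv m (x ** y).
Proof. by elim: m => [//|m IH]; rewrite !spwS -mulA IH. Qed.
Lemma spwC sv m x y : sv ** x = x ** sv -> x ** spw sv m y = spw sv m (x ** y).
Proof. by move=> Cx; elim: m => [//|m IH]; rewrite !spwS mulA -Cx -mulA IH. Qed.
Lemma spwB sv m x y : spw sv m (x - y) = spw sv m x - spw sv m y.
Proof. by elim: m => [//|m IH]; rewrite !spwS IH mulBr. Qed.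
Lemma spwD sv m x y : spw sv m (x + y) = spw sv m x + spw sv m y.
Proof. by elim: m => [//|m IH]; rewrite !spwS IH mulDr. Qed.
Lemma spwZ sv m k x : spw sv m (k *: x) = k *: spw sv m x.
Proof. by elim: m => [//|m IH]; rewrite !spwS IH mulZr. Qed.
Lemma spwN sv m x : spw sv m (- x) = - spw sv m x.
Proof. by rewrite -scaleN1r spwZ scaleN1r. Qed.
Lemma spw_add sv m n x : spw sv m (spw sv n x) = spw sv (m + n)%N x.
Proof. by rewrite /spw iterD. Qed.
Lemma spwSr sv m x : spw sv m (sv ** x) = spw sv m.+1 x.
Proof. by rewrite /spw iterSr. Qed.
Lemma spwCC sv m x : sv ** x = x ** sv -> sv ** spw sv m x = spw sv m x ** sv.
Proof. by move=> Cx; rewrite spwM -Cx spwSr. Qed.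
Lemma spw_star sv m x : star sv = - sv -> sv ** x = x ** sv ->
  star (spw sv m x) = (-1) ^+ m *: spw sv m (star x).
Proof.
move=> st Cx.
have CS : sv ** star x = star x ** sv.
  have := congr1 star Cx; rewrite !starM st mulNl mulNr => /oppr_inj E.
  by rewrite E.
elim: m => [|m IH]; first by rewrite expr0 scale1r.
rewrite spwS starM IH st mulNr mulZl spwM -CS spwSr exprS.
by rewrite mulN1r scaleNr.
Qed.
Lemma spw_br sv m n M N : sv ** M = M ** sv -> sv ** N = N ** sv ->
  lie_br mul (spw sv m M) (spw sv n N) = spw sv (m + n)%N (lie_br mul M N).
Proof.
move=> CM CN; rewrite /lie_br spwB !spwM (spwC _ _ CM) (spwC _ _ CN) !spw_add.
by rewrite addnC.
Qed.

Lemma S2x2 (H2 : (2%:R : K) != 0) (h z t : A) :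
  star h ** h = z -> h ** z = h -> z ** h = 0 -> star z = z -> z ** z = z ->
  t ** h = h ** t -> t ** star h = star h ** t ->
  (forall m, spw (t - star t) m z <> 0) ->
  forall n, exists x, derived mul star n x /\ x <> 0.
Proof.
move=> Hhh Hhz Hzh Hsz Hzz Th Ths Nz.
pose g i := if i == 0%N then h else z.
have Hg : forall i j, (i < 2)%N -> (j < 2)%N -> star (g i) ** g j = if i == j then z else 0.
  case=> [|[|//]] [|[|//]] _ _ //=; rewrite /g /=.
  - by rewrite -Hsz -starM Hzh star0.
  - by rewrite Hsz Hzh.
  - by rewrite Hsz Hzz.
have Hz : forall i, (i < 2)%N -> g i ** z = g i by case=> [|[|//]] _ /=.
have am := amul Hg Hz.
pose a i j := g i ** star (g j).
have sa : forall i j, star (a i j) = a j i by move=> i j; rewrite /a starM starK.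
pose sv := t - star t.
have st : star sv = - sv by rewrite /sv starB starK opprB.
pose C x := sv ** x = x ** sv.
have Cmul : forall x y, C x -> C y -> C (x ** y).
  by move=> x y Cx Cy; rewrite /C in Cx Cy *; rewrite mulA Cx -mulA Cy mulA.
have Cadd : forall x y, C x -> C y -> C (x + y).
  by move=> x y Cx Cy; rewrite /C in Cx Cy *; rewrite mulDl mulDr Cx Cy.
have Csub : forall x y, C x -> C y -> C (x - y).
  by move=> x y Cx Cy; rewrite /C in Cx Cy *; rewrite (@mulBl x y) (@mulBr sv) Cx Cy.
have Ch : C h.
  have E : star t ** h = h ** star t.
    by have := congr1 star Ths; rewrite !starM !starK.
  by rewrite /C /sv mulBl mulBr Th E.
have Chs : C (star h).
  have E : star t ** star h = star h ** star t.
    by have := congr1 star Th; rewrite !starM.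
  by rewrite /C /sv mulBl mulBr Ths E.
have Cz : C z by rewrite -Hhh; apply: Cmul.
have Cg : forall i, C (g i) by move=> i; rewrite /g; case: ifP.
have Csg : forall i, C (star (g i)) by move=> i; rewrite /g; case: ifP => _ //; rewrite Hsz.
have Ca : forall i j, C (a i j) by move=> i j; apply: Cmul.
pose X := a 0%N 1%N - a 1%N 0%N.
pose H := a 0%N 0%N - a 1%N 1%N.
pose P := a 0%N 1%N + a 1%N 0%N.
have CX : C X by apply: Csub.
have CH : C H by apply: Csub.
have CP : C P by apply: Cadd.
have sX : star X = - X by rewrite /X starB !sa opprB.
have sH : star H = H by rewrite /H starB !sa.
have sP : star P = P by rewrite /P starD !sa addrC.
have BXH : lie_br mul X H = - (P + P).
  rewrite /lie_br /X /H /P /a !mulBl !mulBr !am //=.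
  rewrite !(subr0, sub0r, opprK, opprB, addr0, add0r, opprD).
  by congr (_ + _); rewrite addrC.
have BXP : lie_br mul X P = H + H.
  rewrite /lie_br /X /H /P /a !mulBl !mulBr !mulDl !mulDr !am //=.
  by rewrite !(subr0, sub0r, opprK, opprB, addr0, add0r, opprD, oppr0).
have BHP : lie_br mul H P = X + X.
  rewrite /lie_br /X /H /P /a !mulBl !mulBr !mulDl !mulDr !am //=.
  by rewrite !(subr0, sub0r, opprK, opprB, addr0, add0r, opprD, oppr0).
have hh : forall w : A, (2%:R)^-1 *: (w + w) = w.
  by move=> w; rewrite -mulr2n -scaler_nat scalerA mulVf // scale1r.
have D : forall n, exists a1 b1, derived mul star n (spw sv a1.*2 X) /\
    derived mul star n (spw sv b1.*2.+1 H) /\ derived mul star n (spw sv b1.*2.+1 P).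
  elim=> [|n [a1 [b1 [DX [DH DP]]]]].
    exists 0%N, 0%N; split; first by cbn [derived]; rewrite /Defs.skew sX.
    by split; cbn [derived]; rewrite /Defs.skew (spw_star _ st) // ?sH ?sP expr1 scaleN1r.
  exists (b1.*2.+1), (a1 + b1)%N; split; last split.
  - have E : spw sv (b1.*2.+1).*2 X =
        (2%:R)^-1 *: lie_br mul (spw sv b1.*2.+1 H) (spw sv b1.*2.+1 P).
      by rewrite spw_br // BHP spwD hh addnn.
    by rewrite E; apply: kspan_scale; apply: kspan_gen; do 2 eexists; split; [exact: DH | split; [exact: DP|]].
  - have En : (a1.*2 + b1.*2.+1 = (a1 + b1).*2.+1)%N by rewrite doubleD addnS.
    have E : spw sv (a1 + b1).*2.+1 H =
        (2%:R)^-1 *: lie_br mul (spw sv a1.*2 X) (spw sv b1.*2.+1 P).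
      by rewrite spw_br // BXP spwD hh En.
    by rewrite E; apply: kspan_scale; apply: kspan_gen; do 2 eexists; split; [exact: DX | split; [exact: DP|]].
  - have En : (a1.*2 + b1.*2.+1 = (a1 + b1).*2.+1)%N by rewrite doubleD addnS.
    have E : spw sv (a1 + b1).*2.+1 P =
        (- (2%:R)^-1) *: lie_br mul (spw sv a1.*2 X) (spw sv b1.*2.+1 H).
      by rewrite spw_br // BXH spwN spwD scaleNr scalerN opprK hh En.
    by rewrite E; apply: kspan_scale; apply: kspan_gen; do 2 eexists; split; [exact: DX | split; [exact: DH|]].
move=> n; have [a1 [b1 [DX _]]] := D n; exists (spw sv a1.*2 X); split=> // E0.
apply: (Nz a1.*2).
have E1 : a 0%N 0%N ** spw sv a1.*2 X ** a 1%N 1%N = spw sv a1.*2 (a 0%N 1%N).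
  rewrite (spwC _ _ (Ca 0%N 0%N)) spwM; congr spw.
  by rewrite /X /a mulBr mulBl !am //= mul0l subr0.
rewrite E0 mul0r mul0l in E1.
have E2 : star h ** spw sv a1.*2 (a 0%N 1%N) = spw sv a1.*2 z.
  rewrite (spwC _ _ Chs); congr spw.
  by rewrite /a /g /= Hsz mulA Hhh Hzz.
by rewrite -E2 -E1 mul0r.
Qed.

End Part2alg.

Section Part2fin.
Hypothesis H2 : (2%:R : K) != 0.
Hypothesis Hu : forall (B : lmodType K) (mulB : B -> B -> B) (vB : V -> B) (eB esB : Ed -> B),
        nalg_axioms mulB -> leavitt_family s r mulB vB eB esB ->
        exists f : A -> B,
          (forall x y, f (x + y) = f x + f y) /\
          (forall (k : K) x, f (k *: x) = k *: f x) /\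
          (forall x y, f (mul x y) = mulB (f x) (f y)) /\
          (forall v, f (vA v) = vB v) /\
          (forall e, f (eA e) = eB e) /\
          (forall e, f (esA e) = esB e).

Lemma rep_hom : exists fm : A -> op K V Ed,
  (forall x y, fm (x - y) = fm x - fm y) /\
  (forall x y, fm (x + y) = fm x + fm y) /\
  (forall x y, fm (x ** y) = opm (fm x) (fm y)) /\
  (forall v, fm (vA v) = vop K s r v) /\
  (forall e, fm (eA e) = eop K s r e) /\
  (forall e, fm (esA e) = esop K s r e).
Proof.
have [fm [fD [fZ [fM [fv [fe fes]]]]]] := Hu (op_nalg K V Ed) (op_leavitt K s r).
exists fm; split; last by [].
have f0 : fm 0 = 0.
  have H := fD 0 0; rewrite addr0 in H; apply: (@addrI _ (fm 0)); by rewrite -H addr0.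
move=> x y; have := fD (x - y) y; rewrite subrK => E.
by rewrite E addrK.
Qed.

Lemma vA_ne0 w : vA w <> 0.
Proof.
have [fm [fB [_ [_ [fv _]]]]] := rep_hom.
move=> E; apply: (@vop_ne0 K V Ed s r w); rewrite -fv E.
by rewrite -(subrr (0 : A)) fB subrr.
Qed.

Lemma spw_ne0 (t z : A) (T T' Z : op K V Ed) :
  (forall fm : A -> op K V Ed,
    (forall x y, fm (x - y) = fm x - fm y) ->
    (forall x y, fm (x + y) = fm x + fm y) ->
    (forall x y, fm (x ** y) = opm (fm x) (fm y)) ->
    (forall v, fm (vA v) = vop K s r v) ->
    (forall e, fm (eA e) = eop K s r e) ->
    (forall e, fm (esA e) = esop K s r e) ->
    fm t = T /\ fm (star t) = T' /\ fm z = Z) ->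
  (forall m, iter m (opm (T - T')) Z <> 0) ->
  forall m, spw (t - star t) m z <> 0.
Proof.
have [fm [fB [fD [fM [fv [fe fes]]]]]] := rep_hom.
move=> HT Hne m E.
have [ET [ET' EZ]] := HT fm fB fD fM fv fe fes.
apply: (Hne m).
have -> : iter m (opm (T - T')) Z = fm (spw (t - star t) m z).
  elim: m {E} => [|m IH] /=; first by rewrite EZ.
  by rewrite IH -ET -ET' -fB -fM.
by rewrite E -(subrr (0 : A)) fB subrr.
Qed.

Lemma U3' (g0 g1 g2 z : A) :
  star g0 ** g0 = z -> star g0 ** g1 = 0 -> star g0 ** g2 = 0 ->
  star g1 ** g0 = 0 -> star g1 ** g1 = z -> star g1 ** g2 = 0 ->
  star g2 ** g0 = 0 -> star g2 ** g1 = 0 -> star g2 ** g2 = z ->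
  g0 ** z = g0 -> g1 ** z = g1 -> g2 ** z = g2 -> z <> 0 ->
  forall n, exists x, derived mul star n x /\ x <> 0.
Proof.
move=> E00 E01 E02 E10 E11 E12 E20 E21 E22 G0 G1 G2 Nz.
apply: (@U3 (fun i => if i == 0%N then g0 else if i == 1%N then g1 else g2) z) => //.
- by case=> [|[|[|//]]] [|[|[|//]]].
- by case=> [|[|[|//]]].
Qed.

Lemma cSE x e : x ** esA e ** eA e = x ** vA (r e). Proof. by rewrite -mulA SE. Qed.
Lemma cSEz x e f : e <> f -> x ** esA e ** eA f = 0. Proof. by move=> N; rewrite -mulA SEne // mul0r. Qed.
Lemma cVE x e : x ** vA (s e) ** eA e = x ** eA e. Proof. by rewrite -mulA sE. Qed.
Lemma cEV x e : x ** eA e ** vA (r e) = x ** eA e. Proof. by rewrite -mulA Er. Qed.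
Lemma EE0 e f : r e <> s f -> eA e ** eA f = 0.
Proof. by move=> N; exact: (mism (esym (Er e)) (esym (sE f)) N). Qed.
Lemma ES0 e f : r e <> r f -> eA e ** esA f = 0.
Proof. by move=> N; exact: (mism (esym (Er e)) (esym (rS f)) N). Qed.
Lemma SS0 e f : s e <> r f -> esA e ** esA f = 0.
Proof. by move=> N; exact: (mism (esym (Ss e)) (esym (rS f)) N). Qed.
Lemma VE0 a e : a <> s e -> vA a ** eA e = 0.
Proof. by move=> N; exact: (mism (esym (vv a)) (esym (sE e)) N). Qed.
Lemma SV0 e a : s e <> a -> esA e ** vA a = 0.
Proof. by move=> N; exact: (mism (esym (Ss e)) (esym (vv a)) N). Qed.

Lemma cfgA e f : s e <> r e -> s f <> r f -> e <> f -> r e = r f ->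
  forall n, exists x, derived mul star n x /\ x <> 0.
Proof.
move=> He Hf Nef Eef.
apply: (@U3' (vA (r e)) (eA e) (eA f) (vA (r e))); rewrite ?starV ?starE.
- exact: vv.
- by rewrite VE0 // => E; apply: He.
- by rewrite VE0 // Eef => E; apply: Hf.
- by rewrite SV0.
- exact: SE.
- by rewrite SEne.
- by rewrite SV0 // Eef.
- by rewrite SEne // => E; apply: Nef.
- by rewrite SE Eef.
- exact: vv.
- exact: Er.
- by rewrite Eef Er.
- exact: vA_ne0.
Qed.

Lemma cfgB l g : s l = r l -> g <> l -> s g = s l ->
  forall n, exists x, derived mul star n x /\ x <> 0.
Proof.
move=> Hll Ngl Hg.
apply: (@U3' (eA g) (eA l ** eA g) (eA l ** eA l ** eA g) (vA (r g))); rewrite ?starM ?starE.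
- exact: SE.
- by rewrite mulA SEne // mul0l.
- by rewrite !mulA SEne // !mul0l.
- by rewrite cSEz // => E; apply: Ngl.
- by rewrite !mulA cSE -Hll -Hg cVE SE.
- by rewrite !mulA cSE -Hll cVE SEne // mul0l.
- by rewrite !mulA cSEz // => E; apply: Ngl.
- by rewrite !mulA cSE -Hll -Hg cVE cSEz // => E; apply: Ngl.
- by rewrite !mulA cSE -Hll cVE cSE -Hll -Hg cVE SE.
- exact: Er.
- exact: cEV.
- exact: cEV.
- exact: vA_ne0.
Qed.

Lemma cfgC1 e f : s e <> r e -> s f <> r f -> r e = s f -> s e <> r f ->
  forall n, exists x, derived mul star n x /\ x <> 0.
Proof.
move=> He Hf Hef Nuw.
have Nfe : f <> e by move=> E; apply: He; rewrite Hef E.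
apply: (@U3' (vA (r f)) (eA f) (eA e ** eA f) (vA (r f))); rewrite ?starV ?starM ?starE.
- exact: vv.
- by rewrite VE0 // => E; apply: Hf.
- by rewrite mulA VE0 ?mul0l // => E; apply: Nuw.
- by rewrite SV0.
- exact: SE.
- by rewrite mulA SEne ?mul0l.
- by rewrite -mulA SV0 ?mul0r.
- by rewrite cSEz // => E; apply: Nfe.
- by rewrite !mulA cSE Hef cVE SE.
- exact: vv.
- exact: Er.
- exact: cEV.
- exact: vA_ne0.
Qed.

Lemma cfgC2 e f g : s e <> r e -> r e = s f -> r f = s e -> s g = s e -> g <> e ->
  forall n, exists x, derived mul star n x /\ x <> 0.
Proof.
move=> He Hef Hfe Hg Nge.
have Nfe : f <> e by move=> E; apply: He; rewrite -Hfe E.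
have Nfg : f <> g by move=> E; apply: He; rewrite Hef E Hg.
apply: (@U3' (eA g) (eA f ** eA g) (eA e ** eA f ** eA g) (vA (r g))); rewrite ?starM ?starE.
- exact: SE.
- by rewrite mulA SEne ?mul0l // => E; apply: Nfg.
- by rewrite !mulA SEne ?mul0l.
- by rewrite cSEz.
- by rewrite !mulA cSE Hfe -Hg cVE SE.
- by rewrite !mulA cSEz ?mul0l.
- by rewrite !mulA cSEz // => E; apply: Nge.
- by rewrite !mulA cSEz ?mul0l // => E; apply: Nfe.
- by rewrite !mulA cSE Hef cVE cSE Hfe -Hg cVE SE.
- exact: Er.
- exact: cEV.
- exact: cEV.
- exact: vA_ne0.
Qed.

Lemma cfgS1 e f : s e = r e -> (forall g, s g = s e -> g = e) -> r f = s e -> s f <> s e ->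
  forall n, exists x, derived mul star n x /\ x <> 0.
Proof.
move=> Hloop Honly Hrf Hsf.
have Nfe : f <> e by move=> E; apply: Hsf; rewrite E.
have Hfl : s f <> r f by rewrite Hrf.
have Zef : eA e ** eA f = 0 by apply: EE0; rewrite -Hloop => E; apply: Hsf; rewrite E.
have Zff : eA f ** eA f = 0 by apply: EE0 => E; apply: Hfl; rewrite E.
have Zsf : esA f ** esA f = 0 by apply: SS0.
apply: (@S2x2 H2 (eA f) (vA (r f)) (eA e + eA f ** eA e ** esA f)).
- by rewrite starE SE.
- exact: Er.
- by rewrite VE0 // => E; apply: Hfl; rewrite E.
- exact: starV.
- exact: vv.
- rewrite mulDl mulDr Zef add0r cSE Hrf Hloop cEV.
  by rewrite [in RHS]mulA [in RHS]mulA Zff !mul0l addr0.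
- rewrite starE mulDl mulDr -(mulA (eA f ** eA e)) Zsf mul0r addr0 SEne // add0r.
  by rewrite !mulA SE Hrf sE.
- apply: (@spw_ne0 _ _ (eop K s r e + opm (opm (eop K s r f) (eop K s r e)) (esop K s r f))
     (esop K s r e + opm (eop K s r f) (opm (esop K s r e) (esop K s r f))) (vop K s r (r f))).
    move=> fm fB fD fM fv fe fes; split; first by rewrite fD !fM !fe !fes.
    split; last exact: fv.
    by rewrite starD !starM starS !starE fD !fM !fe !fes.
  move=> m; apply: S1_ne => //.
  + by rewrite -Hloop.
  + by move=> g Hg; apply: Honly; rewrite Hg.
Qed.

Lemma cfgS2 e f : s e <> r e -> r e = s f -> r f = s e ->
  (forall g, s g = s e -> g = e) -> (forall g, s g = s f -> g = f) ->
  forall n, exists x, derived mul star n x /\ x <> 0.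
Proof.
move=> He Hef Hfe Hu1 Hv1.
have Nef : e <> f by move=> E; apply: He; rewrite Hef E.
have Zee : eA e ** eA e = 0 by apply: EE0 => E; apply: He; rewrite E.
have CKu : vA (s e) = eA e ** esA e.
  apply: CK1 => g; split; [exact: Hu1 | by move->].
apply: (@S2x2 H2 (eA e) (vA (r e)) (eA e ** eA f + eA f ** eA e)).
- by rewrite starE SE.
- exact: Er.
- by rewrite VE0 // => E; apply: He; rewrite E.
- exact: starV.
- exact: vv.
- rewrite mulDl mulDr -(mulA (eA f)) Zee mul0r addr0.
  by rewrite [X in _ = X + _]mulA Zee mul0l add0r mulA.
- rewrite starE mulDl mulDr -(mulA (eA e)) ES0 ?mul0r ?add0r; last by rewrite Hfe.
  rewrite -mulA -CKu -Hfe Er.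
  by rewrite mulA SE Hef sE mulA SEne // mul0l addr0.
- apply: (@spw_ne0 _ _ (opm (eop K s r e) (eop K s r f) + opm (eop K s r f) (eop K s r e))
     (opm (esop K s r f) (esop K s r e) + opm (esop K s r e) (esop K s r f)) (vop K s r (r e))).
    move=> fm fB fD fM fv fe fes; split; first by rewrite fD !fM !fe.
    split; last exact: fv.
    by rewrite starD !starM !starE fD !fM !fes.
  move=> m; apply: S2_ne => //.
  + by move=> g Hg; apply: Hv1; rewrite Hg.
Qed.

Lemma part2 : ~ disjoint_union_E1_E2_E4 s r ->
  forall n, exists x, derived mul star n x /\ x <> 0.
Proof.
move=> NDU.
have : cA r \/ cB s r \/ cC s r.
  case: (pselect (cA r)) => [?|nA]; first by left.
  case: (pselect (cB s r)) => [?|nB]; first by right; left.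
  case: (pselect (cC s r)) => [?|nC]; first by right; right.
  by case: NDU; apply: noBad_DU.
have only : forall e, (~ exists g, g <> e /\ s g = s e) -> forall g, s g = s e -> g = e.
  move=> e Hno g Hg; case: (pselect (g = e)) => // N; case: Hno; by exists g.
case=> [[e [f [Nef Eef]]]|[[l [g [Hll [Ngl Hg]]]]|[e [f [He [Hf Hef]]]]]].
- case: (pselect (s e = r e)) => Le; case: (pselect (s f = r f)) => Lf.
  + apply: (@cfgB e f Le) => //; first by move=> E; apply: Nef; rewrite E.
    by rewrite Lf -Eef -Le.
  + case: (pselect (exists g, g <> e /\ s g = s e)) => [[g [Nge Hg]]|Hno].
      exact: (cfgB Le Nge Hg).
    apply: (@cfgS1 e f Le (only e Hno)); first by rewrite -Eef Le.
    by move=> E; apply: Nef; rewrite (only e Hno f E).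
  + case: (pselect (exists g, g <> f /\ s g = s f)) => [[g [Ngf Hg]]|Hno].
      exact: (cfgB Lf Ngf Hg).
    apply: (@cfgS1 f e Lf (only f Hno)); first by rewrite Eef Lf.
    by move=> E; apply: Nef; rewrite (only f Hno e E).
  + exact: (@cfgA e f).
- exact: (cfgB Hll Ngl Hg).
- case: (pselect (s e = r f)) => Euw.
  + case: (pselect (exists g, g <> e /\ s g = s e)) => [[g [Nge Hg]]|Hno1].
      exact: (@cfgC2 e f g He Hef (esym Euw) Hg Nge).
    case: (pselect (exists g, g <> f /\ s g = s f)) => [[g [Ngf Hg]]|Hno2].
      exact: (@cfgC2 f e g Hf (esym Euw) Hef Hg Ngf).
    exact: (@cfgS2 e f He Hef (esym Euw) (only e Hno1) (only f Hno2)).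
  + exact: (cfgC1 He Hf Hef Euw).
Qed.

End Part2fin.

End Basics.

Unset Implicit Arguments.

Theorem corollary4p12 (K : fieldType) (V : Type) (Ed : eqType) (s r : Ed -> V)
    (A : lmodType K) (mul : A -> A -> A) (vA : V -> A) (eA esA : Ed -> A)
    (star : A -> A) :
  (2%:R : K) != 0 ->
  row_finite s ->
  is_leavitt_path_algebra s r mul vA eA esA ->
  standard_involution mul vA eA esA star ->
  (lie_solvable mul star <-> disjoint_union_E1_E2_E4 s r) /\
  (lie_nilpotent mul star <-> disjoint_union_E1_E2_E4 s r).
Proof.
move=> H2 _ [Hn Hl Hgen Hu] Hst.
have P1 : disjoint_union_E1_E2_E4 s r -> lie_nilpotent mul star /\ lie_solvable mul star.
  move=> DU; exact: (part1 Hn Hl Hst (DU_F1 DU) (DU_F2 DU) Hgen H2).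
have P2 : ~ disjoint_union_E1_E2_E4 s r ->
    ~ lie_solvable mul star /\ ~ lie_nilpotent mul star.
  move=> NDU; apply: (notsolv Hn Hst); exact: (part2 Hn Hl Hst H2 Hu NDU).
split; split.
- move=> HS; case: (pselect (disjoint_union_E1_E2_E4 s r)) => // NDU.
  by case: (P2 NDU).
- by move=> DU; case: (P1 DU).
- move=> HN; case: (pselect (disjoint_union_E1_E2_E4 s r)) => // NDU.
  by case: (P2 NDU).
- by move=> DU; case: (P1 DU).
Qed.
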